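(* For all integers $m\ge n\ge 2$, $\gamma^{DLD}(K_n\times K_m)=\gamma^{DLD}(K_n\square K_m)$.
   Context: $K_q$ is the complete graph on vertex set $\{1,\dots,q\}$. The Cartesian product $G_1\square G_2$ has vertex set $V_1\times V_2$, with $(u_1,u_2)$ adjacent to $(v_1,v_2)$ iff ($u_1=v_1$ and $u_2v_2\in E_2$) or ($u_2=v_2$ and $u_1v_1\in E_1$). The direct product $G_1\times G_2$ has vertex set $V_1\times V_2$, with $(u_1,u_2)$ adjacent to $(v_1,v_2)$ iff $u_1v_1\in E_1$ and $u_2v_2\in E_2$. For a code (nonempty vertex subset) $C$ and vertex $v$, $I(C;v)=N[v]\cap C$, where $N[v]$ is the closed neighbourhood. A code $C$ is solid-locating-dominating if for all distinct non-codewords $u,v$, $I(C;u)\setminus I(C;v)\ne\emptyset$. $\gamma^{DLD}(G)$ is the minimum size of a solid-locating-dominating code in the finite graph $G$. *)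

(* Defs.v *)
From mathcomp Require Import all_boot.
Set Implicit Arguments. Unset Strict Implicit. Unset Printing Implicit Defensive.

(* A finite simple graph: vertex finType V with adjacency relation adj
   (symmetric and irreflexive for the graphs used here). *)

Definition closed_nbhd (V : finType) (adj : rel V) (v : V) : {set V} :=
  [set u | (u == v) || adj v u].

Definition Iset (V : finType) (adj : rel V) (C : {set V}) (v : V) : {set V} :=
  closed_nbhd adj v :&: C.

Definition solid_locating_dominating (V : finType) (adj : rel V) (C : {set V}) : bool :=
  (C != set0) &&
  [forall u, forall v,
     ((u \notin C) && (v \notin C) && (u != v)) ==>
       (Iset adj C u :\: Iset adj C v != set0)].

(* gamma^DLD(G): minimum size of a solid-locating-dominating code
   (#|V| is an upper bound, attained by C = V when V is nonempty). *)
Definition gammaDLD (V : finType) (adj : rel V) : nat :=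
  \big[minn/#|V|]_(C : {set V} | solid_locating_dominating adj C) #|C|.

(* Complete graph K_q on 'I_q (representing {1,...,q}). *)
Definition Kadj (q : nat) : rel 'I_q := fun i j => i != j.

Definition cart_adj (V1 V2 : finType) (e1 : rel V1) (e2 : rel V2) : rel (V1 * V2) :=
  fun x y => ((x.1 == y.1) && e2 x.2 y.2) || ((x.2 == y.2) && e1 x.1 y.1).

Definition direct_adj (V1 V2 : finType) (e1 : rel V1) (e2 : rel V2) : rel (V1 * V2) :=
  fun x y => e1 x.1 y.1 && e2 x.2 y.2.

(* Main.v *)
Require Import Defs.
From mathcomp Require Import all_boot.

Lemma key n m (C : {set 'I_n * 'I_m}) u v : u \notin C -> v \notin C ->
  Iset (direct_adj (@Kadj n) (@Kadj m)) C u :\: Iset (direct_adj (@Kadj n) (@Kadj m)) C v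
  = Iset (cart_adj (@Kadj n) (@Kadj m)) C v :\: Iset (cart_adj (@Kadj n) (@Kadj m)) C u.
Proof.
move=> uC vC; apply/setP => x; rewrite /Iset /closed_nbhd !inE.
case xC: (x \in C); last by rewrite !andbF.
have xu : (x == u) = false by apply/eqP => E; move: uC; rewrite -E xC.
have xv : (x == v) = false by apply/eqP => E; move: vC; rewrite -E xC.
move: xu xv; case: x {xC} => x1 x2; case: u {uC} => u1 u2; case: v {vC} => v1 v2.
rewrite /direct_adj /cart_adj /Kadj /= !xpair_eqE /=.
rewrite ![_ == x1]eq_sym ![_ == x2]eq_sym.
by case: (x1 == u1); case: (x2 == u2); case: (x1 == v1); case: (x2 == v2).
Qed.

Lemma sld_eq n m (C : {set 'I_n * 'I_m}) :
  solid_locating_dominating (direct_adj (@Kadj n) (@Kadj m)) C =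
  solid_locating_dominating (cart_adj (@Kadj n) (@Kadj m)) C.
Proof.
rewrite /solid_locating_dominating.
set D := direct_adj _ _. set K := cart_adj _ _.
apply/andP/andP => -[c0 /forallP H]; split => //; apply/forallP => u; apply/forallP => v;
  apply/implyP => /andP[/andP[uC vC] uv].
- have /forallP/(_ u)/implyP := H v. rewrite uC vC eq_sym uv /D /K key //; by apply.
- rewrite /D /K key //.
  have /forallP/(_ u)/implyP := H v. rewrite uC vC eq_sym uv; by apply.
Qed.

Theorem theorem17 (n m : nat) (h2n : 2 <= n) (hnm : n <= m) :
  gammaDLD (direct_adj (@Kadj n) (@Kadj m)) = gammaDLD (cart_adj (@Kadj n) (@Kadj m)).
Proof.
rewrite /gammaDLD; apply: eq_bigl => C; exact: sld_eq.
Qed.
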